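(* $\mathrm{co}\text{-}\mathrm{CFL}\not\subseteq\mathrm{CFL}/n$. Equivalently, $\mathrm{co}\text{-}\mathrm{CFL}/n\neq\mathrm{CFL}/n$.
   Context: $\mathrm{CFL}$ is the family of context-free languages, and $\mathrm{co}\text{-}\mathrm{CFL}$ is the family of all languages whose complements (with respect to their alphabet) are context-free. An advice function is a map $h:\mathbb{N}\to\Gamma^*$, for some alphabet $\Gamma$, with $|h(n)|=n$ for all $n$. For strings $x=x_1\cdots x_n$ and $w=\sigma_1\cdots\sigma_n$ of the same length, $\begin{bmatrix}x\\ w\end{bmatrix}$ denotes the string $\begin{bmatrix}x_1\\ \sigma_1\end{bmatrix}\cdots\begin{bmatrix}x_n\\ \sigma_n\end{bmatrix}$ over the product alphabet of pairs of symbols. For a family $\mathcal{C}$ of languages, $\mathcal{C}/n$ is the family of all languages $L$ over an alphabet $\Sigma$ for which there exist an advice function $h$ and a language $L'\in\mathcal{C}$ such that for all $x\in\Sigma^*$: $x\in L$ iff $\begin{bmatrix}x\\ h(|x|)\end{bmatrix}\in L'$. *)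

(* Defs.v *)
From mathcomp Require Import all_boot.
Set Implicit Arguments. Unset Strict Implicit. Unset Printing Implicit Defensive.

Definition language (Sigma : Type) := seq Sigma -> Prop.

Record cfg (N Sigma : finType) := CFG {
  rules : seq (N * seq (N + Sigma));
  start : N
}.

Inductive cfg_step (N Sigma : finType) (G : cfg N Sigma) :
  seq (N + Sigma) -> seq (N + Sigma) -> Prop :=
| CfgStep (u v : seq (N + Sigma)) (A : N) (r : seq (N + Sigma)) :
    (A, r) \in rules G -> cfg_step G (u ++ inl A :: v) (u ++ r ++ v).

Inductive cfg_derives (N Sigma : finType) (G : cfg N Sigma) :
  seq (N + Sigma) -> seq (N + Sigma) -> Prop :=
| DerRefl s : cfg_derives G s s
| DerStep s t u : cfg_step G s t -> cfg_derives G t u -> cfg_derives G s u.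

Definition cfg_lang (N Sigma : finType) (G : cfg N Sigma) : language Sigma :=
  fun w => cfg_derives G [:: inl (start G)] (map inr w).

Definition is_CFL (Sigma : finType) (L : language Sigma) : Prop :=
  exists (N : finType) (G : cfg N Sigma), forall w, L w <-> cfg_lang G w.

Definition is_coCFL (Sigma : finType) (L : language Sigma) : Prop :=
  is_CFL (fun w => ~ L w).

Definition advice (Gamma : Type) (h : nat -> seq Gamma) : Prop :=
  forall n, size (h n) = n.

Definition with_advice
  (C : forall T : finType, language T -> Prop)
  (Sigma : finType) (L : language Sigma) : Prop :=
  exists (Gamma : finType) (h : nat -> seq Gamma) (L' : language (Sigma * Gamma)%type),
    advice h /\ C _ L' /\
    forall x : seq Sigma, L x <-> L' (zip x (h (size x))).

Definition in_CFL_n (Sigma : finType) (L : language Sigma) : Prop :=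
  with_advice (@is_CFL) L.

(* Main.v *)
Require Import Defs.
From mathcomp Require Import all_boot zify.
From Stdlib Require Import Classical ClassicalEpsilon.
Set Implicit Arguments. Unset Strict Implicit. Unset Printing Implicit Defensive.

Section Gen.
Variables (N Sigma : finType) (G : cfg N Sigma).

Inductive gen : N -> seq Sigma -> Prop :=
| Gen A r w : (A, r) \in rules G -> gens r w -> gen A w
with gens : seq (N + Sigma) -> seq Sigma -> Prop :=
| GNil : gens [::] [::]
| GT a r w : gens r w -> gens (inr a :: r) (a :: w)
| GN A r w1 w2 : gen A w1 -> gens r w2 -> gens (inl A :: r) (w1 ++ w2).

Scheme gen_mut := Induction for gen Sort Prop
with gens_mut := Induction for gens Sort Prop.

Lemma gens_cat r1 r2 w1 w2 : gens r1 w1 -> gens r2 w2 -> gens (r1 ++ r2) (w1 ++ w2).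
Proof.
elim=> [|a r w _ IH|A r u1 u2 g _ IH] H2 //=.
  by apply: GT; apply: IH.
by rewrite -catA; apply: GN => //; apply: IH.
Qed.

Lemma gens_split r1 r2 w : gens (r1 ++ r2) w ->
  exists w1 w2, w = w1 ++ w2 /\ gens r1 w1 /\ gens r2 w2.
Proof.
elim: r1 w => [|x r1 IH] w /=.
  by move=> H; exists [::], w; split => //; split => //; apply: GNil.
move=> H; inversion H; subst.
- have [w1 [w2 [-> [H1 H2]]]] := IH _ H3.
  by exists (a :: w1), w2; split => //; split => //; apply: GT.
- have [u1 [u2 [-> [H1' H2']]]] := IH _ H4.
  exists (w1 ++ u1), u2; rewrite catA; split => //; split => //; apply: GN => //.
Qed.

Lemma gens_map w : gens (map inr w) w.
Proof. by elim: w => [|a w IH] /=; [apply: GNil | apply: GT]. Qed.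

Lemma derives_gens s w : cfg_derives G s (map inr w) -> gens s w.
Proof.
move e: (map inr w) => t H; elim: H w e => [s0 | s0 t0 u0 Hst _ IH] w e.
  by subst; apply: gens_map.
have {IH} H := IH w e.
case: Hst H => u v A r Hr H.
have [w1 [w23 [-> [H1 H23]]]] := gens_split H.
have [w2 [w3 [-> [H2 H3]]]] := gens_split H23.
apply: gens_cat => //=.
apply: GN => //; exact: Gen Hr H2.
Qed.

Lemma derives_trans s t u : cfg_derives G s t -> cfg_derives G t u -> cfg_derives G s u.
Proof. elim=> [//|s0 t0 u0 H _ IH] H2; apply: DerStep H (IH H2). Qed.

Lemma derives_ctx x y s t : cfg_derives G s t -> cfg_derives G (x ++ s ++ y) (x ++ t ++ y).
Proof.
elim=> [s0|s0 t0 u0 H _ IH]; first by apply: DerRefl.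
apply: DerStep IH; case: H => u v A r Hr.
have -> : x ++ (u ++ inl A :: v) ++ y = (x ++ u) ++ inl A :: (v ++ y) by rewrite -!catA.
have -> : x ++ (u ++ r ++ v) ++ y = (x ++ u) ++ r ++ (v ++ y) by rewrite -!catA.
by apply: CfgStep.
Qed.

Lemma gen_derives A w : gen A w -> cfg_derives G [:: inl A] (map inr w).
Proof.
move=> H.
apply: (@gen_mut (fun A w _ => cfg_derives G [:: inl A] (map inr w))
                 (fun r w _ => cfg_derives G r (map inr w))) H.
- move=> A0 r w0 Hr _ IH.
  apply: DerStep IH.
  have H0 := @CfgStep _ _ G [::] [::] A0 r Hr; rewrite /= cats0 in H0; exact: H0.
- by apply: DerRefl.
- move=> a r w0 _ IH /=.
  have H0 := @derives_ctx [:: inr a] [::] _ _ IH; rewrite /= !cats0 in H0; exact: H0.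
- move=> A0 r w1 w2 _ IH1 _ IH2; rewrite map_cat.
  apply: derives_trans (_ : cfg_derives G (map inr w1 ++ r) _).
    have H0 := @derives_ctx [::] r _ _ IH1; exact: H0.
  have H0 := @derives_ctx (map inr w1) [::] _ _ IH2; rewrite !cats0 in H0; exact: H0.
Qed.

Lemma gen_lang w : gen (start G) w <-> cfg_lang G w.
Proof.
split; first exact: gen_derives.
rewrite /cfg_lang => /derives_gens H; inversion H; subst.
inversion H4; subst; by rewrite cats0.
Qed.


Definition bmax := foldr (fun p m => maxn (size p.2) m) 0 (rules G).

Lemma rule_size A r : (A, r) \in rules G -> size r <= bmax.
Proof.
rewrite /bmax; elim: (rules G) => [//|p s IH] /=; rewrite inE => /orP [/eqP <-|/IH H] /=.
  by rewrite leq_maxl.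
by rewrite (leq_trans H) // leq_maxr.
Qed.

Definition dprop (l : nat) (w : seq Sigma) (ctx : seq Sigma -> Prop) :=
  exists u y v B, w = u ++ y ++ v /\ l <= size y /\ size y <= bmax.+1 * l /\
    gen B y /\ forall y', gen B y' -> ctx (u ++ y' ++ v).

Lemma decomp l : 0 < l -> forall A w, gen A w -> l <= size w -> dprop l w (gen A).
Proof.
move=> l0 A w H.
apply: (@gen_mut (fun A w _ => l <= size w -> dprop l w (gen A))
                 (fun r w _ => size r * l < size w -> dprop l w (gens r))) H.
- move=> A0 r w0 Hr Hg IH Hl.
  case: (leqP (size w0) (bmax.+1 * l)) => Hb.
    exists [::], w0, [::], A0; rewrite /= cats0; refine (conj _ (conj _ (conj _ (conj _ _)))) => //.
      exact: Gen Hr Hg.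
    by move=> y' Hy; rewrite cats0.
  have Hr' := rule_size Hr.
  have [|u [y [v [B [-> [H1 [H2 [H3 H4]]]]]]]] := IH _.
    apply: leq_ltn_trans Hb; rewrite leq_mul2r; apply/orP; right; exact: leqW.
  exists u, y, v, B; refine (conj _ (conj _ (conj _ (conj _ _)))) => //.
  by move=> y' Hy; apply: Gen Hr (H4 _ Hy).
- by [].
- move=> a r w0 _ IH /= Hl.
  have [|u [y [v [B [-> [H1 [H2 [H3 H4]]]]]]]] := IH _.
    rewrite mulSn in Hl; lia.
  exists (a :: u), y, v, B; refine (conj _ (conj _ (conj _ (conj _ _)))) => //.
  by move=> y' Hy; apply: GT; apply: H4.
- move=> A0 r w1 w2 Hg1 IH1 Hg2 IH2 /= Hl; rewrite size_cat mulSn in Hl.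
  case: (leqP l (size w1)) => Hw1.
    have [u [y [v [B [-> [H1 [H2 [H3 H4]]]]]]]] := IH1 Hw1.
    exists u, y, (v ++ w2), B; rewrite -!catA; refine (conj _ (conj _ (conj _ (conj _ _)))) => //.
    move=> y' Hy; have -> : u ++ y' ++ v ++ w2 = (u ++ y' ++ v) ++ w2 by rewrite -!catA.
    by apply: GN => //; apply: H4.
  have [|u [y [v [B [-> [H1 [H2 [H3 H4]]]]]]]] := IH2 _.
    lia.
  exists (w1 ++ u), y, v, B; rewrite -!catA; refine (conj _ (conj _ (conj _ (conj _ _)))) => //.
  by move=> y' Hy; rewrite -catA; apply: GN => //; apply: H4.
Qed.

End Gen.


Definition ctr (c : bool) (w : seq bool) := exists u v, size u = size v /\ w = u ++ c :: v.
Definition Pc (x : seq bool) := exists y z, x = y ++ z /\ ctr false y /\ ctr true z.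

Definition NT := (bool * bool)%type.
Definition nS : NT := (false, false).
Definition nA : NT := (false, true).
Definition nB : NT := (true, false).
Definition nX : NT := (true, true).
Definition rulesC : seq (NT * seq (NT + bool)) :=
 [:: (nS, [:: inl nA; inl nB]); (nA, [:: inr false]); (nA, [:: inl nX; inl nA; inl nX]);
     (nB, [:: inr true]); (nB, [:: inl nX; inl nB; inl nX]); (nX, [:: inr false]); (nX, [:: inr true])].
Definition Gc : cfg NT bool := CFG rulesC nS.

Definition sem (n : NT) (w : seq bool) : Prop :=
  match n with
  | (false, false) => Pc w
  | (false, true) => ctr false w
  | (true, false) => ctr true w
  | (true, true) => size w = 1
  end.

Fixpoint sems (r : seq (NT + bool)) (w : seq bool) : Prop :=
  match r with
  | [::] => w = [::]
  | inr a :: r' => exists w', w = a :: w' /\ sems r' w'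
  | inl n :: r' => exists w1 w2, w = w1 ++ w2 /\ sem n w1 /\ sems r' w2
  end.

Lemma ctr_wrap c a b w : ctr c w -> ctr c (a :: w ++ [:: b]).
Proof.
case=> u [v [Hs ->]]; exists (a :: u), (v ++ [:: b]); split.
  by rewrite /= size_cat /= Hs addn1.
by rewrite /= -catA.
Qed.

Lemma gen_sound n w : gen Gc n w -> sem n w.
Proof.
move=> H.
apply: (@gen_mut _ _ Gc (fun n w _ => sem n w) (fun r w _ => sems r w)) H => //.
- move=> A r w0 Hr _ IH.
  move: Hr IH; rewrite /= !inE.
  case/orP => [/eqP [-> ->] /= IH|]; last case/orP => [/eqP [-> ->] /= IH|];
  last case/orP => [/eqP [-> ->] /= IH|]; last case/orP => [/eqP [-> ->] /= IH|];
  last case/orP => [/eqP [-> ->] /= IH|]; last case/orP => [/eqP [-> ->] /= IH|/eqP [-> ->] /= IH].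
  + case: IH => w1 [w2 [-> [H1 H2]]]; case: H2 => w3 [w4 [-> [H3 ->]]].
    by exists w1, w3; rewrite cats0.
  + by case: IH => w' [-> ->]; exists [::], [::].
  + case: IH => a [w1 [-> [Ha [w2 [w3 [-> [H2 [c [w4 [-> [Hc ->]]]]]]]]]]].
    rewrite cats0; case: a Ha => [|a [|]] //= _; case: c Hc => [|c [|]] //= _.
    by rewrite -cat1s catA; apply: ctr_wrap.
  + by case: IH => w' [-> ->]; exists [::], [::].
  + case: IH => a [w1 [-> [Ha [w2 [w3 [-> [H2 [c [w4 [-> [Hc ->]]]]]]]]]]].
    rewrite cats0; case: a Ha => [|a [|]] //= _; case: c Hc => [|c [|]] //= _.
    by rewrite -cat1s catA; apply: ctr_wrap.
  + by case: IH => w' [-> ->].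
  + by case: IH => w' [-> ->].
- by move=> a r w0 _ IH /=; exists w0.
- by move=> A r w1 w2 _ IH1 _ IH2 /=; exists w1, w2.
Qed.

Lemma gen_X a : gen Gc nX [:: a].
Proof.
apply: (@Gen _ _ Gc nX [:: inr a]); first by case: a.
by apply: GT; apply: GNil.
Qed.

Lemma gen_ctr c w : ctr c w -> gen Gc (if c then nB else nA) w.
Proof.
case=> u [v [Hs ->]]; elim: u v Hs => [|a u IH] v Hs.
  case: v Hs => // _ /=; apply: (@Gen _ _ Gc _ [:: inr c]); first by case: (c).
  by apply: GT; apply: GNil.
case/lastP: v Hs => [//|v b]; rewrite size_rcons => -[Hs].
apply: (@Gen _ _ Gc _ [:: inl nX; inl (if c then nB else nA); inl nX]); first by case: (c).
have -> : (a :: u) ++ c :: rcons v b = [:: a] ++ ((u ++ c :: v) ++ ([:: b] ++ [::])).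
  by rewrite cats0 /= -cats1 -catA.
apply: GN; first exact: gen_X.
apply: GN; first exact: IH.
apply: GN; first exact: gen_X.
exact: GNil.
Qed.

Lemma gen_complete w : Pc w -> gen Gc nS w.
Proof.
case=> y [z [-> [Hy Hz]]].
apply: (@Gen _ _ Gc _ [:: inl nA; inl nB]) => //.
rewrite -[z]cats0; apply: GN; first exact: (gen_ctr Hy).
apply: GN; first exact: (gen_ctr Hz).
exact: GNil.
Qed.

Lemma Gc_lang w : cfg_lang Gc w <-> Pc w.
Proof.
rewrite -gen_lang; split; first exact: gen_sound.
exact: gen_complete.
Qed.


Lemma Pc_idx x k : size x = k + k -> Pc x ->
  exists p, p < k /\ nth false x p = false /\ nth false x (p + k) = true.
Proof.
move=> Hs [y [z [Hx [[u [v [Huv Hy]]] [u' [v' [Huv' Hz]]]]]]].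
subst; move: Hs; rewrite !size_cat /= ?size_cat /= => Hs.
exists (size u); split; first lia.
have E : u ++ false :: v ++ u' ++ true :: v' = u ++ false :: v ++ u' ++ true :: v' by [].
rewrite -!catA /=.
split; first by rewrite nth_cat ltnn subnn.
rewrite nth_cat.
have -> : (size u + k < size u) = false by lia.
have -> : size u + k - size u = (size v + size u').+1 by lia.
rewrite /= nth_cat.
have -> : (size v + size u' < size v) = false by lia.
have -> : size v + size u' - size v = size u' by lia.
by rewrite nth_cat ltnn subnn.
Qed.

Lemma idx_Pc x k p : size x = k + k -> p < k -> nth false x p = false ->
  nth false x (p + k) = true -> Pc x.
Proof.
move=> Hs Hp H1 H2.
set z := drop (p + p.+1) x.
exists (take p x ++ false :: take p (drop p.+1 x)), z; split.
  rewrite -catA /= -{1}(cat_take_drop p x) (drop_nth false); last lia.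
  rewrite H1; congr (_ ++ _ :: _).
  by rewrite -{1}(cat_take_drop p (drop p.+1 x)) drop_drop /z.
split.
  exists (take p x), (take p (drop p.+1 x)); split => //.
  have h1 : p <= size x by lia.
  have h2 : p <= size (drop p.+1 x) by rewrite size_drop; lia.
  by rewrite !size_takel.
have Hzs : size z = (k - p - 1) + (k - p) by rewrite /z size_drop; lia.
exists (take (k - p - 1) z), (drop (k - p) z); split.
  rewrite size_takel ?size_drop; lia.
have -> : true = nth false z (k - p - 1).
  by rewrite /z nth_drop -H2; congr nth; lia.
set q := k - p - 1 in Hzs *.
have -> : k - p = q.+1 by rewrite /q; lia.
by rewrite -drop_nth ?cat_take_drop //; lia.
Qed.

Lemma sq_nth (w : seq bool) j : j < size w ->
  nth false (w ++ w) (j + size w) = nth false (w ++ w) j.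
Proof.
move=> Hj; rewrite !nth_cat Hj.
have -> : (j + size w < size w) = false by lia.
by rewrite addnK.
Qed.

Lemma notPc_sq (w : seq bool) : ~ Pc (w ++ w).
Proof.
move=> /(Pc_idx (size_cat _ _)) [p [Hp [H1 H2]]].
by rewrite sq_nth // H1 in H2.
Qed.


Lemma take_zip' (S T : Type) n (s : seq S) (t : seq T) :
  take n (zip s t) = zip (take n s) (take n t).
Proof. by elim: n s t => [|n IH] [|x s] [|y t] //=; rewrite IH. Qed.

Lemma drop_zip' (S T : Type) n (s : seq S) (t : seq T) :
  drop n (zip s t) = zip (drop n s) (drop n t).
Proof.
elim: n s t => [|n IH] [|x s] [|y t] //=.
all: try by case: (drop _ _).
Qed.

Definition swp (T : Type) (s1 s2 : seq T) i len :=
  take i s1 ++ take len (drop i s2) ++ drop (i + len) s1.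

Lemma size_swp T (s1 s2 : seq T) i len : size s1 = size s2 -> i + len <= size s1 ->
  size (swp s1 s2 i len) = size s1.
Proof.
move=> Hs Hl; rewrite /swp !size_cat size_takel ?size_takel ?size_drop; lia.
Qed.

Lemma nth_swp T (x0 : T) s1 s2 i len j : size s1 = size s2 -> i + len <= size s1 ->
  nth x0 (swp s1 s2 i len) j =
  if (i <= j) && (j < i + len) then nth x0 s2 j else nth x0 s1 j.
Proof.
move=> Hs Hl; rewrite /swp nth_cat size_takel; last lia.
case: (ltnP j i) => Hj.
  by rewrite nth_take //; have -> : (i <= j) = false by lia.
rewrite nth_cat size_takel ?size_drop; last lia.
case: (ltnP (j - i) len) => Hj2.
  rewrite nth_take // nth_drop.
  have -> : (j < i + len) = true by lia.
  by rewrite /=; congr nth; lia.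
rewrite nth_drop.
have -> : (j < i + len) = false by lia.
by rewrite /=; congr nth; lia.
Qed.

Lemma zip_swp (S T : Type) (s1 s2 : seq S) (a : seq T) i len :
  size s1 = size a -> size s2 = size a ->
  zip (swp s1 s2 i len) a = swp (zip s1 a) (zip s2 a) i len.
Proof.
move=> H1 H2; rewrite /swp !take_zip' !drop_zip'.
have Ea : a = take i a ++ take len (drop i a) ++ drop (i + len) a.
  have -> : drop (i + len) a = drop len (drop i a) by rewrite drop_drop addnC.
  by rewrite !cat_take_drop.
rewrite [in X in X = _]Ea.
rewrite zip_cat; last by rewrite !size_take ?H1.  
rewrite zip_cat; first by rewrite take_zip'.
by rewrite !size_take !size_drop ?H1 ?H2.
Qed.

Lemma swap_agree (w1 w2 : seq bool) k i len j :
  size w1 = k -> size w2 = k -> i + len <= k + k -> len <= k ->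
  ~ Pc (swp (w1 ++ w1) (w2 ++ w2) i len) -> ~ Pc (swp (w2 ++ w2) (w1 ++ w1) i len) ->
  i <= j < i + len -> nth false (w1 ++ w1) j = nth false (w2 ++ w2) j.
Proof.
move=> H1 H2 Hl Hk N1 N2 /andP [Hj1 Hj2].
set s1 := w1 ++ w1; set s2 := w2 ++ w2.
have S1 : size s1 = k + k by rewrite size_cat H1.
have S2 : size s2 = k + k by rewrite size_cat H2.
have E1 : forall p, p < k -> nth false s1 (p + k) = nth false s1 p.
  by move=> p Hp; rewrite /s1 -H1 sq_nth ?H1.
have E2 : forall p, p < k -> nth false s2 (p + k) = nth false s2 p.
  by move=> p Hp; rewrite /s2 -H2 sq_nth ?H2.
have Sx : size (swp s1 s2 i len) = k + k by rewrite size_swp // S1 ?S2.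
have Sx' : size (swp s2 s1 i len) = k + k by rewrite size_swp // S2 ?S1.
have Nx := fun q => nth_swp false q (etrans S1 (esym S2)) (leq_trans Hl (eq_leq (esym S1))).
have Nx' := fun q => nth_swp false q (etrans S2 (esym S1)) (leq_trans Hl (eq_leq (esym S2))).
apply/eqP; apply/negPn/negP => Hne.
case: (ltnP j k) => Hjk.
-
  have Hout : (i <= j + k) && (j + k < i + len) = false by lia.
  have Hin : (i <= j) && (j < i + len) = true by lia.
  case Ec : (nth false s2 j).
  + apply: N2; apply: (idx_Pc Sx' Hjk).
      by rewrite Nx' Hin; move: Hne; rewrite Ec; case: (nth false s1 j).
    by rewrite Nx' Hout E2 // Ec.
  + apply: N1; apply: (idx_Pc Sx Hjk).
      by rewrite Nx Hin Ec.
    by rewrite Nx Hout E1 //; move: Hne; rewrite Ec; case: (nth false s1 j).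
- set p := j - k.
  have Hp : p < k by rewrite /p; lia.
  have Hjp : j = p + k by rewrite /p; lia.
  have Hout : (i <= p) && (p < i + len) = false by rewrite /p; lia.
  have Hin : (i <= p + k) && (p + k < i + len) = true by lia.
  rewrite Hjp in Hne.
  case Ec : (nth false s2 (p + k)).
  + apply: N1; apply: (idx_Pc Sx Hp).
      by rewrite Nx Hout -E1 //; move: Hne; rewrite Ec; case: (nth false s1 (p + k)).
    by rewrite Nx Hin Ec.
  + apply: N2; apply: (idx_Pc Sx' Hp).
      by rewrite Nx' Hout -E2 // Ec.
    by rewrite Nx' Hin; move: Hne; rewrite Ec; case: (nth false s1 (p + k)).
Qed.


Lemma numfact B n : 0 < B ->
  (B * (4 * (81 * B ^ 2 * n).+1) + B * (4 * (81 * B ^ 2 * n).+1)).+1 *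
  (B * (4 * (81 * B ^ 2 * n).+1) + B * (4 * (81 * B ^ 2 * n).+1)).+1 * n
  < 2 ^ (4 * (81 * B ^ 2 * n).+1).
Proof.
move=> HB.
set C := 81 * B ^ 2 * n; set m := C.+1.
have Hm : 0 < m by [].
have HBm : 0 < B * m by rewrite muln_gt0 HB.
have h1 : (B * (4 * m) + B * (4 * m)).+1 <= 9 * (B * m) by lia.
have h2 : (B * (4 * m) + B * (4 * m)).+1 * (B * (4 * m) + B * (4 * m)).+1 * n
          <= C * (m * m).
  apply: (leq_trans (leq_mul (leq_mul h1 h1) (leqnn n))).
  rewrite /C; have -> : B ^ 2 = B * B by rewrite expnS expn1.
  apply: eq_leq; nia.
apply: (leq_ltn_trans h2).
have h3 : C * (m * m) < m * (m * m) by rewrite ltn_pmul2r ?muln_gt0 ?Hm.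
apply: (leq_trans h3).
have h4 : m < 2 ^ m by apply: ltn_expl.
rewrite [4 * m]mulnC expnM.
set X := 2 ^ m in h4 *.
have hX := ltnW h4.
apply: (leq_trans (leq_mul hX (leq_mul hX hX))).
rewrite !expnS expn0 muln1.
have hX0 : 0 < X by lia.
by rewrite [X * (X * (X * X))]mulnC leq_pmulr.
Qed.

Lemma mod_back i j k : 0 < k -> j < k -> (i + (j + k - i %% k) %% k) %% k = j.
Proof.
move=> Hk Hj; rewrite modnDmr.
have Hi := ltn_pmod i Hk.
rewrite {1}(divn_eq i k).
have -> : i %/ k * k + i %% k + (j + k - i %% k) = i %/ k * k + (j + k) by lia.
by rewrite modnMDl modnDr modn_small.
Qed.

Lemma sq_mod (w : seq bool) k j : size w = k -> j < k + k ->
  nth false (w ++ w) j = nth false w (j %% k).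
Proof.
move=> Hs Hj; rewrite nth_cat Hs; case: ltnP => H.
  by rewrite modn_small.
have -> : j = (j - k) + k by lia.
by rewrite modnDr modn_small; [congr nth; lia | lia].
Qed.


Lemma decomp_eq (T : Type) (s u y v : seq T) : s = u ++ y ++ v ->
  u = take (size u) s /\ y = take (size y) (drop (size u) s) /\ v = drop (size u + size y) s.
Proof.
move=> ->; split; first by rewrite take_size_cat.
split; first by rewrite drop_size_cat // take_size_cat.
by rewrite addnC -drop_drop drop_size_cat // drop_size_cat.
Qed.

Lemma main_contra (Gamma N : finType) (h : nat -> seq Gamma) (G : cfg N (bool * Gamma)%type) :
  advice h -> (forall x : seq bool, ~ Pc x <-> cfg_lang G (zip x (h (size x)))) -> False.
Proof.
move=> Hadv HL.
set Bb := (bmax G).+1.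
set m := (81 * Bb ^ 2 * #|N|).+1.
set l := 4 * m.
set k := Bb * l.
have Hl0 : 0 < l by rewrite /l.
have Hlk : l <= k by rewrite /k leq_pmull.
have Hk0 : 0 < k by lia.
set a := h (k + k).
have Ha : size a = k + k by rewrite /a Hadv.
have Hgen : forall w : seq bool, size w = k -> gen G (start G) (zip (w ++ w) a).
  move=> w Hw; apply/gen_lang; have := (HL (w ++ w)).1 (@notPc_sq w).
  by rewrite size_cat Hw.
pose T := ('I_(k + k).+1 * 'I_(k + k).+1 * N)%type.
pose Q (w : seq bool) (t : T) := exists u y v, zip (w ++ w) a = u ++ y ++ v /\
   size u = t.1.1 /\ size y = t.1.2 /\ l <= size y /\ size y <= Bb * l /\
   gen G t.2 y /\ forall y', gen G t.2 y' -> gen G (start G) (u ++ y' ++ v).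
have Hex : forall w : k.-tuple bool, exists t, Q w t.
  move=> w.
  have Hz : size (zip (w ++ w) a) = k + k by rewrite size_zip size_cat size_tuple Ha minnn.
  have [|u [y [v [Bn [Hd [H1 [H2 [H3 H4]]]]]]]] := decomp Hl0 (Hgen w (size_tuple w)).
    by rewrite Hz; lia.
  have Hs : size u + size y <= k + k by have := congr1 size Hd; rewrite Hz !size_cat; lia.
  exists (inord (size u), inord (size y), Bn); exists u, y, v.
  rewrite /= !inordK.
  - exact: (conj Hd (conj erefl (conj erefl (conj H1 (conj H2 (conj H3 H4)))))).
  - by rewrite ltnS (leq_trans (leq_addl _ _) Hs).
  - by rewrite ltnS (leq_trans (leq_addr _ _) Hs).
have key : forall (w1 w2 : k.-tuple bool) t, Q w1 t -> Q w2 t ->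
  forall d, d < l -> nth false w1 ((t.1.1 + d) %% k) = nth false w2 ((t.1.1 + d) %% k).
  move=> w1 w2 t [u1 [y1 [v1 [E1 [Hu1 [Hy1 [Hl1 [Hb1 [G1 C1]]]]]]]]]
                 [u2 [y2 [v2 [E2 [Hu2 [Hy2 [Hl2 [Hb2 [G2 C2]]]]]]]]] d Hd.
  set i : nat := t.1.1 in Hu1 Hu2 *; set len : nat := t.1.2 in Hy1 Hy2.
  have Sz : forall w : k.-tuple bool, size (zip (w ++ w) a) = k + k.
    by move=> w; rewrite size_zip size_cat size_tuple Ha minnn.
  have Hil : i + len <= k + k.
    by rewrite -Hu1 -Hy1 -(Sz w1) E1 !size_cat addnA leq_addr.
  have Hlen : len <= k by rewrite -Hy1.
  have Hdl : d < len by rewrite -Hy1; apply: leq_trans Hl1.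
  have [D1u [D1y D1v]] := decomp_eq E1.
  have [D2u [D2y D2v]] := decomp_eq E2.
  have S1 : size (val w1 ++ val w1) = size a by rewrite size_cat size_tuple Ha.
  have S2 : size (val w2 ++ val w2) = size a by rewrite size_cat size_tuple Ha.
  have NP : forall (x1 x2 : k.-tuple bool) u1 y1 v1 u2 y2 v2,
      zip (x1 ++ x1) a = u1 ++ y1 ++ v1 -> zip (x2 ++ x2) a = u2 ++ y2 ++ v2 ->
      size u1 = i -> size u2 = i -> size y1 = len -> size y2 = len ->
      gen G (start G) (u1 ++ y2 ++ v1) ->
      ~ Pc (swp (val x1 ++ val x1) (val x2 ++ val x2) i len).
    move=> x1 x2 u1' y1' v1' u2' y2' v2' F1 F2 Su1 Su2 Sy1 Sy2 Hg.
    have [F1u [F1y F1v]] := decomp_eq F1.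
    have [F2u [F2y F2v]] := decomp_eq F2.
    have Sx1 : size (val x1 ++ val x1) = size a by rewrite size_cat size_tuple Ha.
    have Sx2 : size (val x2 ++ val x2) = size a by rewrite size_cat size_tuple Ha.
    apply/HL; rewrite size_swp ?Sx1 ?Sx2 ?Ha // -/a.
    rewrite zip_swp // -/(swp _ _ _ _); apply/gen_lang.
    rewrite Su1 in F1u; rewrite Sy2 Su2 in F2y; rewrite Su1 Sy1 in F1v.
    by rewrite /swp -F1u -F2y -F1v.
  have N1 := NP w1 w2 _ _ _ _ _ _ E1 E2 Hu1 Hu2 Hy1 Hy2 (C1 _ G2).
  have N2 := NP w2 w1 _ _ _ _ _ _ E2 E1 Hu2 Hu1 Hy2 Hy1 (C2 _ G1).
  have Hj : i <= i + d < i + len by rewrite leq_addr ltn_add2l.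
  have Hjk : i + d < k + k by apply: leq_trans Hil; rewrite ltn_add2l.
  have := swap_agree (size_tuple w1) (size_tuple w2) Hil Hlen N1 N2 Hj.
  by rewrite !(sq_mod (size_tuple _) Hjk).
pose f := fun w : k.-tuple bool => proj1_sig (constructive_indefinite_description _ (Hex w)).
have Hf : forall w : k.-tuple bool, Q w (f w) := fun w => proj2_sig (constructive_indefinite_description _ (Hex w)).
pose g := fun w : k.-tuple bool =>
  (f w, [ffun e : 'I_(k - l) => nth false w ((((f w).1.1 : nat) + l + e) %% k)]).
have ginj : injective g.
  move=> w1 w2; rewrite /g => -[Hfe Hff].
  rewrite -Hfe in Hff.
  apply: val_inj; apply: (@eq_from_nth _ false); first by rewrite !size_tuple.
  move=> j; rewrite size_tuple => Hj.
  set i : nat := (f w1).1.1 in Hff *.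
  set e := (j + k - i %% k) %% k.
  have He : e < k by rewrite /e ltn_pmod.
  have Hie : (i + e) %% k = j := mod_back i Hk0 Hj.
  rewrite -Hie.
  case: (ltnP e l) => Hel.
    apply: (key w1 w2 (f w1) (Hf w1) _ e Hel).
    by rewrite Hfe; apply: Hf.
  have Hel' : e - l < k - l by apply: ltn_sub2r => //; apply: leq_ltn_trans Hel He.
  have := congr1 (fun F : {ffun 'I_(k - l) -> bool} => F (Ordinal Hel')) Hff; rewrite !ffunE /=.
  by rewrite -addnA subnKC.
have := leq_card g ginj.
rewrite card_prod card_tuple card_ffun !card_prod !card_ord card_bool.
have Hnum := @numfact Bb #|N| (ltn0Sn _).
rewrite -/m -/l -/k in Hnum.
have -> : 2 ^ k = 2 ^ l * 2 ^ (k - l) by rewrite -expnD subnKC.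
rewrite leq_pmul2r ?expn_gt0 //.
by rewrite leqNgt Hnum.
Qed.

Theorem proposition4p4 :
  exists (Sigma : finType) (L : language Sigma),
    is_coCFL L /\ ~ in_CFL_n L.
Proof.
exists bool, (fun x => ~ Pc x); split.
- exists (bool * bool)%type, Gc => w; split => H.
    by apply/Gc_lang; apply: NNPP H.
  by move=> H'; apply: H'; apply/Gc_lang.
- case=> Gamma [h [L' [Hadv [[N [G HG]] HL]]]].
  apply: (@main_contra Gamma N h G Hadv) => x.
  split => H; first by apply/HG/HL.
  by apply/HL/HG.
Qed.
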